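(* Let $\Omega$ be the unit disk in $\mathbb{R}^2$ and $(x,v)\in\Omega\times\mathbb{R}^2$, and let $k\ge0$ be the number of reflections of the billiard trajectory starting at $x$ with velocity $v$. If $k\ge1$, let $(\cos\theta,\sin\theta)$ be the first reflection point, $A$ the angle between $v$ and the outward normal $(\cos\theta,\sin\theta)$ at that point, and $z_j=\big(\cos(\theta+j(\pi-2A)),\sin(\theta+j(\pi-2A))\big)$ for $j\in\mathbb Z$. Then $$\eta(x,v)=k\,(z_{k-1}-z_k)+R_{k(\pi-2A)}(x+v),$$ where $R_\alpha$ is the rotation matrix of angle $\alpha$; for $k=0$ this reads $\eta(x,v)=x+v$.
   Context: $\eta(x,v)$ is the endpoint of the billiard trajectory in $\Omega$ starting at $x$ with initial direction $v/|v|$, consisting of straight segments specularly reflected ($u\mapsto u-2(n\cdot u)n$, $n$ outward normal) at each boundary hit, stopped when its total length equals $|v|$. *)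

(* Defs.v *)
From Stdlib Require Import Reals.
Open Scope R_scope.

Definition pt := (R * R)%type.

Definition padd (p q : pt) : pt := (fst p + fst q, snd p + snd q).
Definition psub (p q : pt) : pt := (fst p - fst q, snd p - snd q).
Definition pscal (a : R) (p : pt) : pt := (a * fst p, a * snd p).
Definition pdot (p q : pt) : R := fst p * fst q + snd p * snd q.
Definition pnorm (p : pt) : R := sqrt (pdot p p).

Definition rot (alpha : R) (p : pt) : pt :=
  (cos alpha * fst p - sin alpha * snd p, sin alpha * fst p + cos alpha * snd p).

(* Specular reflection u |-> u - 2 (n.u) n ; for the unit disk the outward
   unit normal at a boundary point p is p itself. *)
Definition reflect (n u : pt) : pt := psub u (pscal (2 * pdot n u) n).

Fixpoint total_len (s : nat -> R) (k : nat) : R :=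
  match k with
  | O => 0
  | S k' => total_len s k' + s k
  end.

(* Billiard trajectory in the open unit disk Omega = {p | |p| < 1},
   starting at x with initial direction v/|v|, of total length |v|.
   q i (1 <= i <= k) are the successive boundary hit (reflection) points,
   q 0 = x; u i is the direction after the i-th reflection (u 0 = v/|v|);
   s i is the length of the straight segment from q (i-1) to q i, which stays
   in Omega before reaching the boundary; y is the endpoint, reached after
   travelling the remaining length |v| - (s 1 + ... + s k) along u k without
   hitting the boundary before the end.  k is the number of reflections. *)
Definition billiard_path (x v : pt) (k : nat) (q u : nat -> pt) (s : nat -> R)
    (y : pt) : Prop :=
  q O = x /\
  u O = pscal (/ pnorm v) v /\
  (forall i : nat, (1 <= i <= k)%nat ->
     0 < s i /\
     pnorm (q i) = 1 /\
     q i = padd (q (i - 1)%nat) (pscal (s i) (u (i - 1)%nat)) /\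
     (forall r, 0 < r < s i ->
        pnorm (padd (q (i - 1)%nat) (pscal r (u (i - 1)%nat))) < 1) /\
     u i = reflect (q i) (u (i - 1)%nat)) /\
  total_len s k <= pnorm v /\
  (forall r, 0 < r < pnorm v - total_len s k ->
     pnorm (padd (q k) (pscal r (u k))) < 1) /\
  y = padd (q k) (pscal (pnorm v - total_len s k) (u k)).

Definition zpt (theta A j : R) : pt :=
  (cos (theta + j * (PI - 2 * A)), sin (theta + j * (PI - 2 * A))).

(* Main.v *)
Require Import Defs.
From Stdlib Require Import Reals Lra Lia Psatz.
Open Scope R_scope.

Definition E (t : R) : pt := (cos t, sin t).

Lemma sqrt1 x : sqrt x = 1 -> x = 1.
Proof.
  intros H. destruct (Rle_dec 0 x) as [h|h].
  - rewrite <- (sqrt_sqrt x h), H; ring.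
  - rewrite sqrt_neg_0 in H; lra.
Qed.

Lemma dotE a b : pdot (E a) (E b) = cos (b - a).
Proof. unfold pdot, E; simpl. rewrite cos_minus; ring. Qed.

Lemma reflE p A : reflect (E p) (E (p + A)) = E (p + (PI - 2*A) + A).
Proof.
  unfold reflect. rewrite dotE. replace (p + A - p) with A by ring.
  unfold psub, pscal, E; simpl.
  replace (p + (PI - 2*A) + A) with ((p - A) + PI) by ring.
  rewrite neg_cos, neg_sin.
  rewrite cos_plus, sin_plus, cos_minus, sin_minus.
  f_equal; ring.
Qed.

Lemma chordC p A : cos (p + (PI - 2*A)) = cos p + 2 * cos A * cos (p + (PI - 2*A) + A).
Proof.
  replace (p + (PI - 2*A) + A) with ((p - A) + PI) by ring.
  replace (p + (PI - 2*A)) with (((p - A) - A) + PI) by ring.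
  rewrite !neg_cos.
  remember (p - A) as w. replace p with (w + A) by (subst; ring).
  rewrite cos_plus, cos_minus. ring.
Qed.

Lemma chordS p A : sin (p + (PI - 2*A)) = sin p + 2 * cos A * sin (p + (PI - 2*A) + A).
Proof.
  replace (p + (PI - 2*A) + A) with ((p - A) + PI) by ring.
  replace (p + (PI - 2*A)) with (((p - A) - A) + PI) by ring.
  rewrite !neg_sin.
  remember (p - A) as w. replace p with (w + A) by (subst; ring).
  rewrite sin_plus, sin_minus. ring.
Qed.

Lemma rotE g t : rot g (E t) = E (t + g).
Proof. unfold rot, E; simpl. rewrite cos_plus, sin_plus. f_equal; ring. Qed.
Lemma rot_add g a b : rot g (padd a b) = padd (rot g a) (rot g b).
Proof. destruct a, b; unfold rot, padd; simpl; f_equal; ring. Qed.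
Lemma rot_scal g r a : rot g (pscal r a) = pscal r (rot g a).
Proof. destruct a; unfold rot, pscal; simpl; f_equal; ring. Qed.

Lemma step p A s0 (q1 u0 u1 q2 : pt) :
  q1 = E p -> u0 = E (p + A) -> u1 = reflect q1 u0 -> 0 < s0 -> pnorm q2 = 1 ->
  q2 = padd q1 (pscal s0 u1) ->
  u1 = E (p + (PI - 2*A) + A) /\ s0 = 2 * cos A /\ q2 = E (p + (PI - 2*A)).
Proof.
  intros H1 H2 H3 Hs Hn H4.
  assert (Hu1 : u1 = E (p + (PI - 2*A) + A)) by (subst; apply reflE).
  assert (Hd : pdot q1 u1 = - cos A).
  { rewrite H1, Hu1, dotE. replace (p + (PI - 2 * A) + A - p) with (PI - A) by ring.
    rewrite cos_minus, cos_PI, sin_PI; ring. }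
  assert (Hq1 : pdot q1 q1 = 1) by (rewrite H1, dotE, Rminus_diag, cos_0; reflexivity).
  assert (Hu : pdot u1 u1 = 1) by (rewrite Hu1, dotE, Rminus_diag, cos_0; reflexivity).
  apply sqrt1 in Hn. unfold pnorm in Hn.
  assert (Hs0 : s0 = 2 * cos A).
  { rewrite H4 in Hn. clear H4. destruct q1 as [a b]; destruct u1 as [c d].
    unfold pdot, padd, pscal in *; simpl in *.
    assert (s0 * (s0 - 2 * cos A) = 0) by nra.
    apply Rmult_integral in H. lra. }
  split; [exact Hu1|split; [exact Hs0|]].
  rewrite H4, H1, Hu1, Hs0. unfold padd, pscal, E; simpl.
  rewrite (chordC p A), (chordS p A). reflexivity.
Qed.

Theorem propositionA1 (x v : pt) (k : nat) (q u : nat -> pt) (s : nat -> R)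
    (y : pt) :
  pnorm x < 1 ->
  billiard_path x v k q u s y ->
  (k = O -> y = padd x v) /\
  ((1 <= k)%nat ->
   forall theta A : R,
     q 1%nat = (cos theta, sin theta) ->
     u O = (cos (theta + A), sin (theta + A)) ->
     y = padd (pscal (INR k) (psub (zpt theta A (INR k - 1)) (zpt theta A (INR k))))
              (rot (INR k * (PI - 2 * A)) (padd x v))).
Proof.
  intros _ [Hq0 [Hu0 [Hstep [Hlen [Hin Hy]]]]].
  split.
  - intros ->. rewrite Hy, Hq0, Hu0. simpl total_len. destruct v as [v1 v2].
    unfold padd, pscal; simpl.
    destruct (Req_dec (pnorm (v1, v2)) 0) as [H0|H0].
    + unfold pnorm, pdot in H0; simpl in H0.
      apply sqrt_eq_0 in H0; [|nra].
      assert (v1 = 0) by nra. assert (v2 = 0) by nra. subst.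
      f_equal; ring.
    + f_equal; field; exact H0.
  - intros Hk theta A Hq1 Hu0'.
    set (al := PI - 2 * A).
    assert (HV : v = pscal (pnorm v) (E (theta + A))).
    { rewrite Hu0 in Hu0'. destruct v as [v1 v2]. unfold pscal, E in *; simpl in *.
      injection Hu0' as e1 e2.
      destruct (Req_dec (pnorm (v1, v2)) 0) as [H0|H0].
      - rewrite H0, Rinv_0 in e1, e2. pose proof (sin2_cos2 (theta + A)).
        unfold Rsqr in H. rewrite <- e1, <- e2 in H. lra.
      - rewrite <- e1, <- e2. f_equal; field; exact H0. }
    assert (Inv : forall n, (S n <= k)%nat ->
              q (S n) = E (theta + INR n * al) /\ u n = E (theta + INR n * al + A)).
    { induction n as [|n IH]; intros Hn.
      - simpl. replace (theta + 0 * al) with theta by ring. split; [exact Hq1|].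
        rewrite Hu0'. reflexivity.
      - destruct (IH ltac:(lia)) as [Ha Hb].
        destruct (Hstep (S n) ltac:(lia)) as [_ [_ [_ [_ Hr]]]].
        destruct (Hstep (S (S n)) ltac:(lia)) as [Hs [Hn1 [He _]]].
        replace (S n - 1)%nat with n in Hr by lia.
        replace (S (S n) - 1)%nat with (S n) in He by lia.
        destruct (step _ _ _ _ _ _ _ Ha Hb Hr Hs Hn1 He) as [H1 [H2 H3]].
        rewrite S_INR. fold al in H1, H3.
        replace (theta + (INR n + 1) * al) with (theta + INR n * al + al) by ring.
        split; assumption. }
    assert (Hs2 : forall n, (S (S n) <= k)%nat -> s (S (S n)) = 2 * cos A).
    { intros n Hn. destruct (Inv n ltac:(lia)) as [Ha Hb].
      destruct (Hstep (S n) ltac:(lia)) as [_ [_ [_ [_ Hr]]]].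
      destruct (Hstep (S (S n)) ltac:(lia)) as [Hs [Hn1 [He _]]].
      replace (S n - 1)%nat with n in Hr by lia.
      replace (S (S n) - 1)%nat with (S n) in He by lia.
      destruct (step _ _ _ _ _ _ _ Ha Hb Hr Hs Hn1 He) as [H1 [H2 H3]].
      exact H2. }
    assert (HL : forall m, (S m <= k)%nat -> total_len s (S m) = s 1%nat + INR m * (2 * cos A)).
    { induction m as [|m IH]; intros Hm.
      - simpl. ring.
      - change (total_len s (S (S m))) with (total_len s (S m) + s (S (S m))).
        rewrite IH by lia. rewrite Hs2 by lia. rewrite S_INR. ring. }
    destruct k as [|m]; [lia|].
    destruct (Inv m ltac:(lia)) as [Ha Hb].
    destruct (Hstep (S m) ltac:(lia)) as [_ [_ [_ [_ Hr]]]].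
    replace (S m - 1)%nat with m in Hr by lia.
    rewrite Ha, Hb in Hr. rewrite reflE in Hr. fold al in Hr.
    destruct (Hstep 1%nat ltac:(lia)) as [_ [_ [He1 _]]].
    assert (He1' : E theta = padd x (pscal (s 1%nat) (E (theta + A)))).
    { rewrite <- Hq0. unfold E. rewrite <- Hq1, <- Hu0'. exact He1. }
    assert (Gen : forall V s1 (x v : pt), v = pscal V (E (theta + A)) ->
       E theta = padd x (pscal s1 (E (theta + A))) ->
       padd x v = padd (E theta) (pscal (V - s1) (E (theta + A)))).
    { intros V s1 [x1 x2] [v1 v2] h1 h2. rewrite h1, h2.
      unfold padd, pscal, E; simpl. f_equal; ring. }
    assert (Hx := Gen _ _ _ _ HV He1').
    rewrite Hx, rot_add, rot_scal, !rotE.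
    rewrite Hy, HL by lia. rewrite Ha, Hr.
    rewrite S_INR. fold al.
    replace (INR m + 1 - 1) with (INR m) by ring.
    unfold zpt. fold al.
    replace (theta + (INR m + 1) * al) with (theta + INR m * al + al) by ring.
    replace (theta + A + (INR m + 1) * al) with (theta + INR m * al + al + A) by ring.
    replace (theta + (INR m + 1) * al) with (theta + INR m * al + al) by ring.
    set (p := theta + INR m * al). unfold al.
    unfold padd, pscal, psub, E; simpl.
    rewrite (chordC p A), (chordS p A).
    f_equal; ring.
Qed.
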